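(* Let $B$ be a finite set of Boolean functions and $\langle W,D\rangle$ a $B$-default theory. If $[B]\subseteq \mathrm{R}_1$, then $\langle W,D\rangle$ has a unique stable extension. If $[B]\subseteq\mathrm{M}$, then $\langle W,D\rangle$ has at most one stable extension.
   Context: A clone is a set of Boolean functions containing all projections and closed under composition; $[B]$ is the smallest clone containing $B$. $\mathrm{R}_1$ is the clone of $1$-reproducing functions ($f(1,\dots,1)=1$); $\mathrm{M}$ is the clone of monotone functions. For a finite set $B$ of Boolean functions (possibly including constants $0,1$), a $B$-formula uses only connectives from $B$. A $B$-default theory $\langle W,D\rangle$ consists of a finite set $W$ of $B$-formulae and a finite set $D$ of rules $\frac{\alpha:\beta}{\gamma}$ with $B$-formulae $\alpha,\beta,\gamma$. With $\mathrm{Th}(A)=\{\varphi\mid A\models\varphi\}$, for a set $E$ of formulae $\Gamma(E)$ is the smallest set with $W\subseteq\Gamma(E)$, $\Gamma(E)=\mathrm{Th}(\Gamma(E))$, and $\gamma\in\Gamma(E)$ whenever $\frac{\alpha:\beta}{\gamma}\in D$, $\alpha\in\Gamma(E)$, $\neg\beta\notin E$. A stable extension is a fixed point $E=\Gamma(E)$. *)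

(* Defs.v *)
From Stdlib Require List.
From mathcomp Require Import all_boot.
Set Implicit Arguments. Unset Strict Implicit. Unset Printing Implicit Defensive.

(* A Boolean function: an arity n together with a map {0,1}^n -> {0,1}.
   Constants 0,1 are the 0-ary functions. *)
Definition boolfun : Type := {n : nat & n.-tuple bool -> bool}.
Definition mkbf n (f : n.-tuple bool -> bool) : boolfun := existT _ n f.

Inductive clone (B : list boolfun) : forall n, (n.-tuple bool -> bool) -> Prop :=
| clone_base n (f : n.-tuple bool -> bool) : List.In (mkbf f) B -> clone B f
| clone_proj n (i : 'I_n) : clone B (fun x : n.-tuple bool => tnth x i)
| clone_comp m n (f : m.-tuple bool -> bool) (g : 'I_m -> n.-tuple bool -> bool) :
    clone B f -> (forall i, clone B (g i)) ->
    clone B (fun x : n.-tuple bool => f [tuple g i x | i < m])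
| clone_ext n (f f' : n.-tuple bool -> bool) :
    clone B f -> (forall x, f x = f' x) -> clone B f'.

Definition R1 n (f : n.-tuple bool -> bool) : Prop := f [tuple true | _ < n] = true.
Definition Mono n (f : n.-tuple bool -> bool) : Prop :=
  forall x y : n.-tuple bool, (forall i, tnth x i <= tnth y i) -> f x <= f y.

Definition clone_sub_R1 (B : list boolfun) : Prop :=
  forall n (f : n.-tuple bool -> bool), clone B f -> R1 f.
Definition clone_sub_M (B : list boolfun) : Prop :=
  forall n (f : n.-tuple bool -> bool), clone B f -> Mono f.

Inductive formula : Type :=
| Var : nat -> formula
| App : boolfun -> seq formula -> formula.

Fixpoint eval (v : nat -> bool) (phi : formula) : bool :=
  match phi with
  | Var x => v x
  | App c args =>
      let vs := map (eval v) args in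
      (projT2 c) [tuple nth false vs i | i < projT1 c]
  end.

Inductive Bformula (B : list boolfun) : formula -> Prop :=
| Bf_var x : Bformula B (Var x)
| Bf_app c args : List.In c B -> size args = projT1 c ->
    (forall psi, List.In psi args -> Bformula B psi) -> Bformula B (App c args).

Definition negf : boolfun := mkbf (fun t : 1.-tuple bool => ~~ tnth t ord0).
Definition Neg (phi : formula) : formula := App negf [:: phi].

Definition fset := formula -> Prop.

Definition entails (A : fset) (phi : formula) : Prop :=
  forall v : nat -> bool, (forall psi, A psi -> eval v psi) -> eval v phi.
Definition Th (A : fset) : fset := entails A.

Definition seteq (A A' : fset) : Prop := forall phi, A phi <-> A' phi.

Record rule := Rule { prereq : formula; justif : formula; concl : formula }.

Definition Bdefault_theory (B : list boolfun) (W : list formula) (D : list rule) :=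
  (forall phi, List.In phi W -> Bformula B phi) /\
  (forall d, List.In d D ->
     [/\ Bformula B (prereq d), Bformula B (justif d) & Bformula B (concl d)]).

Definition Gamma_closed (W : list formula) (D : list rule) (E S : fset) : Prop :=
  [/\ (forall phi, List.In phi W -> S phi),
      seteq (Th S) S &
      (forall d, List.In d D -> S (prereq d) -> ~ E (Neg (justif d)) -> S (concl d))].

Definition Gamma (W : list formula) (D : list rule) (E : fset) : fset :=
  fun phi => forall S, Gamma_closed W D E S -> S phi.

Definition stable_extension (W : list formula) (D : list rule) (E : fset) : Prop :=
  seteq E (Gamma W D E).

(* Main.v *)
Require Import Defs.
From Stdlib Require List.
From Stdlib Require Import Classical.
From mathcomp Require Import all_boot.

Lemma In_nth (s : seq formula) i x0 : i < size s -> List.In (nth x0 s i) s.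
Proof.
elim: s i => [|a s IH] [|i] //= H; first by left.
right; exact: IH.
Qed.

Lemma eval_Neg v phi : eval v (Neg phi) = ~~ eval v phi.
Proof. by rewrite /= tnth_mktuple. Qed.

Definition v1 : nat -> bool := fun _ => true.

Lemma R1_true B phi : clone_sub_R1 B -> Bformula B phi -> eval v1 phi.
Proof.
move=> HR; elim => [x|c args Hin Hsz Hall IH] //.
destruct c as [n f]; simpl in *.
have Hc : clone B f by apply: clone_base.
have HRf := HR _ _ Hc; rewrite /R1 in HRf.
suff -> : [tuple nth false [seq eval v1 i | i <- args] i | i < n] = [tuple true | _ < n] by [].
apply: eq_from_tnth => i; rewrite !tnth_mktuple.
have Hi : i < size args by rewrite Hsz.
rewrite (nth_map (Var 0)) //; apply: IH; exact: In_nth.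
Qed.

Lemma mono_eval B phi (v w : nat -> bool) : clone_sub_M B -> Bformula B phi ->
  (forall x, v x <= w x) -> eval v phi <= eval w phi.
Proof.
move=> HM Hb Hvw; elim: Hb => [x|c args Hin Hsz Hall IH] //=.
destruct c as [n f]; simpl in *.
have Hc : clone B f by apply: clone_base.
apply: (HM _ _ Hc) => i; rewrite !tnth_mktuple.
have Hi : i < size args by rewrite Hsz.
rewrite !(nth_map (Var 0)) //; apply: IH; exact: In_nth.
Qed.

Section G.
Variables (W : list formula) (D : list rule).

Lemma Gamma_self E : Gamma_closed W D E (Gamma W D E).
Proof.
split.
- by move=> phi Hin S [HW _ _]; apply: HW.
- move=> phi; split; last first.
    by move=> H v Hv; apply: Hv.
  move=> Hth S HS; case: (HS) => _ HT _; apply/HT => v Hv.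
  apply: Hth => psi Hpsi; apply: Hv; exact: Hpsi.
- move=> d Hd Hp Hn S HS; case: (HS) => _ _ HR; apply: HR => //; exact: Hp.
Qed.

Lemma Gamma_ext E E' :
  (forall d, List.In d D -> (E (Neg (justif d)) <-> E' (Neg (justif d)))) ->
  seteq (Gamma W D E) (Gamma W D E').
Proof.
move=> H phi; split => Hg S [HW HT HR]; apply: Hg; split => // d Hd Hp Hn;
  apply: HR => // He; apply: Hn; by apply/(H d Hd).
Qed.

Lemma Gamma_anti E E' : (forall phi, E phi -> E' phi) ->
  forall phi, Gamma W D E' phi -> Gamma W D E phi.
Proof.
move=> H phi Hg S [HW HT HR]; apply: Hg; split => // d Hd Hp Hn.
apply: HR => // He; apply: Hn; exact: H.
Qed.

Lemma stable_closed E : stable_extension W D E -> Gamma_closed W D E E.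
Proof.
move=> HE; case: (Gamma_self E) => HW HT HR; split.
- by move=> phi Hin; apply/HE; apply: HW.
- move=> phi; split; last by move=> H v Hv; apply: Hv.
  move=> Hth; apply/HE; apply/HT => v Hv; apply: Hth => psi Hpsi.
  apply: Hv; by apply/HE.
- move=> d Hd Hp Hn; apply/HE; apply: HR => //; by apply/HE.
Qed.
End G.

Theorem lemma5p2 (B : list boolfun) (W : list formula) (D : list rule) :
  Bdefault_theory B W D ->
  (clone_sub_R1 B ->
     exists E, stable_extension W D E /\
       forall E', stable_extension W D E' -> seteq E' E) /\
  (clone_sub_M B ->
     forall E1 E2, stable_extension W D E1 -> stable_extension W D E2 -> seteq E1 E2).
Proof.
case=> HWB HDB; split.
- move=> HR.
  have HS1 : forall E phi, Gamma W D E phi -> eval v1 phi.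
    move=> E phi Hg; apply: (Hg (fun phi => eval v1 phi)); split.
    + move=> psi Hin; apply: (@R1_true B _ HR); exact: HWB.
    + move=> psi; split; last by move=> H v Hv; apply: Hv.
      move=> Hth; apply: Hth => ? ; exact.
    + move=> d Hd _ _; case: (HDB d Hd) => _ _ Hc; exact: @R1_true B _ HR Hc.
  have Hnone : forall E, (forall phi, E phi -> eval v1 phi) ->
      seteq (Gamma W D E) (Gamma W D (fun _ => False)).
    move=> E HE; apply: Gamma_ext => d Hd; split => // H.
    have := HE _ H; rewrite eval_Neg.
    case: (HDB d Hd) => _ Hj _; by rewrite (@R1_true B _ HR Hj).
  have H0 : forall phi, Gamma W D (fun _ => False) phi -> eval v1 phi
    := HS1 _.
  exists (Gamma W D (fun _ => False)); split.
  + move=> phi; split => H.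
      by apply/(Hnone _ H0).
    by apply/(Hnone _ H0).
  + move=> E' HE'.
    have H1 : forall phi, E' phi -> eval v1 phi.
      by move=> phi H; apply: (HS1 E'); apply/HE'.
    move=> phi; split => H.
      by apply/(Hnone E' H1); apply/HE'.
    by apply/HE'; apply/(Hnone E' H1).
- move=> HM.
  pose Eb : fset := fun phi => exists b, phi = Neg b /\ eval v1 b = false.
  have claim : forall E, stable_extension W D E ->
      (forall phi, E phi) \/ seteq E (Gamma W D Eb).
    move=> E HE; have [HW HT HR] := @stable_closed W D E HE.
    case: (classic (exists v, forall psi, E psi -> eval v psi))
      => [[v Hv]|Hno]; last first.
      left => phi; apply/HT => v Hv; exfalso; apply: Hno; by exists v.
    right.
    have Hv1 : forall phi, E phi -> eval v1 phi.
      move=> phi Hphi.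
      have : Gamma W D E phi by apply/HE.
      move=> Hg; suff [] : E phi /\ eval v1 phi by [].
      apply: (Hg (fun phi => E phi /\ eval v1 phi)); split.
      + move=> psi Hin; split; first exact: HW.
        have := @mono_eval B _ v v1 HM (HWB _ Hin) (fun x => leq_b1 _).
        by rewrite (Hv _ (HW _ Hin)); case: (eval v1 _).
      + move=> psi; split; last by move=> H w Hw; apply: Hw.
        move=> Hth; split.
          apply/HT => w Hw; apply: Hth => x [Hx _]; exact: Hw.
        apply: Hth => x [_ Hx]; exact: Hx.
      + move=> d Hd [Hp _] Hn; have Hc := HR d Hd Hp Hn; split => //.
        case: (HDB d Hd) => _ _ Hcb.
        have := @mono_eval B _ v v1 HM Hcb (fun x => leq_b1 _).
        by rewrite (Hv _ Hc); case: (eval v1 _).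
    have Heqv : forall d, List.In d D -> (E (Neg (justif d)) <-> Eb (Neg (justif d))).
      move=> d Hd; case: (HDB d Hd) => _ Hj _; split.
        move=> Hn; exists (justif d); split => //.
        by have := Hv1 _ Hn; rewrite eval_Neg; case: (eval v1 _).
      move=> [b [Heq Hb]]; have Eqb : b = justif d by case: Heq.
      subst b; apply/HT => w _; rewrite eval_Neg.
      have := @mono_eval B _ w v1 HM Hj (fun x => leq_b1 _).
      by rewrite Hb; case: (eval w _).
    have Hg := @Gamma_ext W D E Eb Heqv.
    move=> phi; split => H.
    + by apply/Hg; apply/HE.
    + by apply/HE; apply/Hg.
  have Hall : forall E1 E2, stable_extension W D E1 -> stable_extension W D E2 ->
      (forall phi, E1 phi) -> seteq E2 (Gamma W D Eb) -> forall phi, E2 phi.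
    move=> E1 E2 H1 H2 Hev Hb phi; apply/Hb.
    apply: (@Gamma_anti W D Eb E1) => //; by apply/H1.
  move=> E1 E2 H1 H2.
  case: (claim _ H1) => [A1|B1]; case: (claim _ H2) => [A2|B2].
  + by move=> phi; split.
  + have := Hall _ _ H1 H2 A1 B2 => A2; by move=> phi; split.
  + have := Hall _ _ H2 H1 A2 B1 => A1; by move=> phi; split.
  + move=> phi; rewrite B1 B2; done.
Qed.
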